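(* Let $\mathcal{L}$ be a finite algebraic language, $\mathcal{V}$ an equational class of $\mathcal{L}$-algebras, $\Sigma$ a finite set of $\mathcal{L}$-identities and $X\supseteq\mathrm{Var}(\Sigma)$ a finite set of variables. Consider the condition $(\star)$: whenever $\Sigma\Rightarrow\Delta$ is $\mathcal{V}$-admissible with $\mathrm{Var}(\Delta)\subseteq X$, there exists $\varphi\approx\psi\in\Delta$ such that $\Sigma\Rightarrow\{\varphi\approx\psi\}$ is $\mathcal{V}$-admissible. If $\mathrm{type}(\mathsf{E}_{\mathcal{V}}(\Sigma,X))=1$, then $\Sigma$ satisfies $(\star)$. Conversely, if $\mathrm{type}(\mathsf{E}_{\mathcal{V}}(\Sigma,X))\in\{1,\omega\}$ and $\Sigma$ satisfies $(\star)$, then $\mathrm{type}(\mathsf{E}_{\mathcal{V}}(\Sigma,X))=1$.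
   Context: $\mathbf{Fm}_{\mathcal{L}}(Y)$ is the formula algebra over variables $Y$ ($\omega$ = all variables); $\mathrm{Var}(\Gamma)$ is the set of variables occurring in $\Gamma$; substitutions are homomorphisms of formula algebras. A clause $\Sigma\Rightarrow\Delta$ is a pair of finite sets of identities; a substitution $\sigma\colon\mathbf{Fm}_{\mathcal{L}}(X)\to\mathbf{Fm}_{\mathcal{L}}(\omega)$ is a $\mathcal{V}$-unifier of $\Gamma$ (with $\mathrm{Var}(\Gamma)\subseteq X$) if $\mathcal{V}\models\sigma(\varphi)\approx\sigma(\psi)$ for all $\varphi\approx\psi\in\Gamma$; $\Sigma\Rightarrow\Delta$ is $\mathcal{V}$-admissible if every substitution $\sigma\colon\mathbf{Fm}_{\mathcal{L}}(\mathrm{Var}(\Sigma\cup\Delta))\to\mathbf{Fm}_{\mathcal{L}}(\omega)$ that $\mathcal{V}$-unifies $\Sigma$ also $\mathcal{V}$-unifies some member of $\Delta$. $h_{\mathcal{V}}$ is the canonical homomorphism from $\mathbf{Fm}_{\mathcal{L}}(Y)$ onto the free algebra $\mathbf{F}_{\mathcal{V}}(Y)$. For substitutions over $X$, $\sigma_2\sqsubseteq_{\mathcal{V}}\sigma_1$ iff $\ker(h_{\mathcal{V}}\circ\sigma_1)\subseteq\ker(h_{\mathcal{V}}\circ\sigma_2)$; $\mathsf{E}_{\mathcal{V}}(\Sigma,X)$ is the set of $\mathcal{V}$-unifiers of $\Sigma$ over $X$ preordered by $\sqsubseteq_{\mathcal{V}}$. Types of a preordered set $(P,\le)$: a complete set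 is $M\subseteq P$ with every $x\in P$ below some $y\in M$; a $\mu$-set is a complete set whose distinct elements are pairwise incomparable; all $\mu$-sets have the same cardinality. The type is $0$ (nullary) if there is no $\mu$-set, $\infty$ (infinitary) if there is an infinite $\mu$-set, $\omega$ (finitary) if there is a finite $\mu$-set of cardinality $>1$, and $1$ (unitary) if there is a $\mu$-set of cardinality $1$; types are ordered $1<\omega<\infty<0$. (Type is considered for nonempty preordered sets.) *)

(* Defs.v *)
From mathcomp Require Import all_boot.
From Stdlib Require List.
Set Implicit Arguments. Unset Strict Implicit. Unset Printing Implicit Defensive.

Record language := Language { op_sym : finType ; arity : op_sym -> nat }.

(** Formulas (terms) over the countable set of variables omega = nat. *)
Inductive term (L : language) : Type :=
| tVar : nat -> term L
| tApp : forall f : op_sym L, ('I_(arity f) -> term L) -> term L.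
Arguments tVar {L} _.
Arguments tApp {L} f _.

Definition identity (L : language) := (term L * term L)%type.

Fixpoint occurs (L : language) (x : nat) (t : term L) : Prop :=
  match t with
  | tVar y => x = y
  | tApp f a => exists i, occurs x (a i)
  end.

Definition vars_in (L : language) (G : seq (identity L)) (X : seq nat) : Prop :=
  forall e, List.In e G -> forall x, occurs x e.1 \/ occurs x e.2 -> x \in X.

(** Substitutions (homomorphisms of formula algebras) are determined by the
    images of the variables. *)
Fixpoint subst (L : language) (s : nat -> term L) (t : term L) : term L :=
  match t with
  | tVar x => s x
  | tApp f a => tApp f (fun i => subst s (a i))
  end.

Record algebra (L : language) := Algebra {
  carrier :> Type ;
  interp : forall f : op_sym L, ('I_(arity f) -> carrier) -> carrier }.

Fixpoint eval (L : language) (A : algebra L) (v : nat -> A) (t : term L) : A :=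
  match t with
  | tVar x => v x
  | tApp f a => @interp L A f (fun i => eval v (a i))
  end.

Definition holds (L : language) (A : algebra L) (e : identity L) : Prop :=
  forall v : nat -> A, eval v e.1 = eval v e.2.

(** An equational class V is given by a set of defining identities Ax:
    V = Mod(Ax).  V |= s ~ t means every algebra of V satisfies s ~ t. *)
Definition Vsat (L : language) (Ax : identity L -> Prop) (e : identity L) : Prop :=
  forall A : algebra L, (forall a, Ax a -> holds A a) -> holds A e.

Definition unifies (L : language) (Ax : identity L -> Prop) (s : nat -> term L)
  (G : seq (identity L)) : Prop :=
  forall e, List.In e G -> Vsat Ax (subst s e.1, subst s e.2).

(** Sigma => Delta is V-admissible.  (Substitutions on Fm(Var(Sigma u Delta))
    are represented by arbitrary maps nat -> term; only the values on the
    occurring variables matter.) *)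
Definition admissible (L : language) (Ax : identity L -> Prop)
  (S D : seq (identity L)) : Prop :=
  forall s : nat -> term L, unifies Ax s S -> exists2 e, List.In e D & unifies Ax s [:: e].

Definition star (L : language) (Ax : identity L -> Prop) (S : seq (identity L))
  (X : seq nat) : Prop :=
  forall D : seq (identity L), vars_in D X -> admissible Ax S D ->
    exists2 e, List.In e D & admissible Ax S [:: e].

Definition term_over (L : language) (X : seq nat) (t : term L) : Prop :=
  forall x, occurs x t -> x \in X.

(** s2 [=_V s1 iff ker(h_V o s1) is contained in ker(h_V o s2), kernels taken
    on Fm(X). *)
Definition subsumed (L : language) (Ax : identity L -> Prop) (X : seq nat)
  (s2 s1 : nat -> term L) : Prop :=
  forall t u : term L, term_over X t -> term_over X u ->
    Vsat Ax (subst s1 t, subst s1 u) -> Vsat Ax (subst s2 t, subst s2 u).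

(** E_V(Sigma, X): the V-unifiers Fm(X) -> Fm(omega) of Sigma.  A substitution
    with domain Fm(X) is represented canonically by the map nat -> term that is
    the identity outside X. *)
Definition unifiers (L : language) (Ax : identity L -> Prop) (S : seq (identity L))
  (X : seq nat) (s : nat -> term L) : Prop :=
  (forall x, x \notin X -> s x = tVar x) /\ unifies Ax s S.

Definition complete_set (T : Type) (P : T -> Prop) (le : T -> T -> Prop)
  (M : T -> Prop) : Prop :=
  (forall y, M y -> P y) /\ (forall x, P x -> exists2 y, M y & le x y).

Definition mu_set (T : Type) (P : T -> Prop) (le : T -> T -> Prop)
  (M : T -> Prop) : Prop :=
  complete_set P le M /\
  (forall y z, M y -> M z -> y <> z -> ~ le y z /\ ~ le z y).

Definition has_card (T : Type) (M : T -> Prop) (n : nat) : Prop :=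
  exists s : list T, List.NoDup s /\ length s = n /\ (forall x, M x <-> List.In x s).

Definition type_unitary (T : Type) (P : T -> Prop) (le : T -> T -> Prop) : Prop :=
  exists M, mu_set P le M /\ has_card M 1.

Definition type_finitary (T : Type) (P : T -> Prop) (le : T -> T -> Prop) : Prop :=
  exists M n, mu_set P le M /\ has_card M n /\ 1 < n.

(* Main.v *)
Require Import Defs.
From mathcomp Require Import all_boot.
From Stdlib Require List.
From Stdlib Require Import Classical FunctionalExtensionality.
Set Implicit Arguments. Unset Strict Implicit.

Lemma subst_agree (L : language) (s1 s2 : nat -> term L) (t : term L) :
  (forall x, occurs x t -> s1 x = s2 x) -> subst s1 t = subst s2 t.
Proof.
elim: t => [x|f a IH] /= H; first by apply: H.
congr tApp; apply: functional_extensionality => i.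
apply: IH => x Hx; apply: H; by exists i.
Qed.

Definition restr (L : language) (X : seq nat) (s : nat -> term L) : nat -> term L :=
  fun x => if x \in X then s x else tVar x.

Lemma restr_agree (L : language) X (s : nat -> term L) t :
  term_over X t -> subst (restr X s) t = subst s t.
Proof.
move=> H; apply: subst_agree => x /H Hx; by rewrite /restr Hx.
Qed.

Lemma restr_unifier (L : language) Ax S X (s : nat -> term L) :
  vars_in S X -> unifies Ax s S -> unifiers Ax S X (restr X s).
Proof.
move=> HS Hs; split.
  by move=> x Hx; rewrite /restr (negbTE Hx).
move=> e He; rewrite !restr_agree; first exact: Hs.
- by move=> x Hx; apply: (HS e He); right.
- by move=> x Hx; apply: (HS e He); left.
Qed.

Lemma choose_list (T U : Type) (P : T -> U -> Prop) (l : list T) :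
  (forall m, List.In m l -> exists e, P m e) ->
  exists D : list U, (forall m, List.In m l -> exists e, List.In e D /\ P m e) /\
    (forall e, List.In e D -> exists m, List.In m l /\ P m e).
Proof.
elim: l => [|a l IH] H.
  by exists nil; split => //.
have [e He] := H a (or_introl erefl).
have [D [H1 H2]] := IH (fun m Hm => H m (or_intror Hm)).
exists (e :: D); split.
- move=> m [<-|Hm]; first by exists e; split; [left|].
  have [e' [? ?]] := H1 m Hm; exists e'; split; [right|]; done.
- move=> e' [<-|He']; first by exists a; split; [left|].
  have [m [? ?]] := H2 e' He'; exists m; split; [right|]; done.
Qed.

Theorem proposition3p4 (L : language) (Ax : identity L -> Prop)
  (S : seq (identity L)) (X : seq nat) :
  vars_in S X ->
  (type_unitary (unifiers Ax S X) (subsumed Ax X) -> star Ax S X) /\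
  ((type_unitary (unifiers Ax S X) (subsumed Ax X) \/
    type_finitary (unifiers Ax S X) (subsumed Ax X)) ->
   star Ax S X -> type_unitary (unifiers Ax S X) (subsumed Ax X)).
Proof.
move=> HS; split.
  move=> [M [[[HMP HMc] _] [l [_ [Hlen HMl]]]]] D HD Had.
  case: l Hlen HMl => [|m [|? ?]] //= _ HMl.
  have Mm : M m by apply/HMl; left.
  have [e He Hme] := Had m (proj2 (HMP m Mm)).
  exists e => // s Hs.
  have Hu := restr_unifier HS Hs.
  have [y My Hy] := HMc _ Hu.
  have ym : y = m by have [] := proj1 (HMl y) My.
  subst y.
  have Hme' := Hme e (or_introl erefl).
  have Hov1 : term_over X e.1 by move=> x Hx; apply: (HD e He); left.
  have Hov2 : term_over X e.2 by move=> x Hx; apply: (HD e He); right.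
  have := Hy _ _ Hov1 Hov2 Hme'.
  rewrite !restr_agree // => Hf; exists e; first by left.
  move=> e' [<-|[]]; exact: Hf.
move=> [//|[M [n [[[HMP HMc] Hinc] [[l [Hnd [Hlen HMl]]] Hn]]]]] Hstar.
exfalso.
pose P (m : nat -> term L) (e : identity L) :=
  term_over X e.1 /\ term_over X e.2 /\ Vsat Ax (subst m e.1, subst m e.2) /\
  exists j, unifiers Ax S X j /\ ~ Vsat Ax (subst j e.1, subst j e.2).
have HP : forall m, List.In m l -> exists e, P m e.
  move=> m Hm.
  have [j Hj Hjm] : exists2 j, List.In j l & j <> m.
    case: l Hnd Hlen HMl Hm => [|a [|b l]] //= Hnd Hlen' _.
      by rewrite -Hlen' in Hn.
    move=> Hm.
    case: (classic (a = m)) => [am|am]; last by exists a; [left|].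
    subst a; exists b; [by right; left|] => bm; subst b.
    by inversion Hnd; apply: H1; left.
  have Mm : M m by apply/HMl.
  have Mj : M j by apply/HMl.
  have [_ Hnle] := Hinc m j Mm Mj (fun E => Hjm (esym E)).
  apply: NNPP => Hne; apply: Hnle => t u Ht Hu Hmt.
  apply: NNPP => Hjt; apply: Hne; exists (t, u).
  refine (conj Ht (conj Hu (conj Hmt _))).
  exists j; split; [exact: HMP j Mj | exact: Hjt].
have [D [HD1 HD2]] := choose_list HP.
have HvD : vars_in D X.
  move=> e He x Hx; have [m [_ [H1 [H2 _]]]] := HD2 e He.
  by case: Hx => [/H1|/H2].
have HaD : admissible Ax S D.
  move=> s Hs; have Hu := restr_unifier HS Hs.
  have [y My Hy] := HMc _ Hu.
  have [e [He [H1 [H2 [H3 _]]]]] := HD1 y (proj1 (HMl y) My).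
  exists e => //; move=> e' [<-|[]].
  by have := Hy _ _ H1 H2 H3; rewrite !restr_agree.
have [e He Hadm] := Hstar D HvD HaD.
have [m [_ [_ [_ [_ [j [[_ Hj] Hnj]]]]]]] := HD2 e He.
have [e' [<-|[]] Hj'] := Hadm j Hj.
by apply: Hnj; apply: Hj'; left.
Qed.
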